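(* Let $d\ge 2$. There exist constants $C>1$ and $c\in(0,1)$ depending only on $d$ such that the following holds for every finite field $\mathbb F_q$ of characteristic greater than two. Let $P=\{x\in\mathbb F_q^d: x_1^2+\cdots+x_{d-1}^2=x_d\}$ and $\overline P=\{x\in\mathbb F_q^d: x_1^2+\cdots+x_{d-1}^2=-x_d\}$. Let $a\in\mathbb F_q^d\setminus\overline P$, $E\subset P+a=\{x+a:x\in P\}$ and $F\subset\mathbb F_q^d$. If $|E||F|\ge Cq^d$, then $|\Pi(E,F)|\ge c\,q$.
   Context: $\mathbb F_q$ is a finite field with $q$ elements and characteristic greater than two. For $E,F\subset\mathbb F_q^d$, $\Pi(E,F)=\{x\cdot y: x\in E,\ y\in F\}$ with $x\cdot y=\sum_i x_iy_i$. *)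

(* Defs.v *)
From HB Require Import structures.
From mathcomp Require Import all_boot all_order all_algebra.
From mathcomp Require Import reals.
Set Implicit Arguments. Unset Strict Implicit. Unset Printing Implicit Defensive.
Import Order.TTheory GRing.Theory Num.Theory.
Local Open Scope ring_scope.

(* Vectors of F_q^d are row vectors 'rV[F]_d; coordinates x_1..x_d are
   x 0 i for i : 'I_d (0-based), so x_d is the coordinate with index d.-1. *)

Definition dotp (F : finFieldType) (d : nat) (x y : 'rV[F]_d) : F :=
  \sum_(i < d) x 0 i * y 0 i.

Definition paraboloid (F : finFieldType) (d : nat) : {set 'rV[F]_d} :=
  [set x : 'rV[F]_d | [forall j : 'I_d, (j == d.-1 :> nat) ==>
      (\sum_(i < d | i != j) x 0 i ^+ 2 == x 0 j)]].

Definition paraboloid_bar (F : finFieldType) (d : nat) : {set 'rV[F]_d} :=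
  [set x : 'rV[F]_d | [forall j : 'I_d, (j == d.-1 :> nat) ==>
      (\sum_(i < d | i != j) x 0 i ^+ 2 == - x 0 j)]].

Definition translate (F : finFieldType) (d : nat) (A : {set 'rV[F]_d})
  (a : 'rV[F]_d) : {set 'rV[F]_d} := [set x + a | x in A].

Definition dot_set (F : finFieldType) (d : nat) (E G : {set 'rV[F]_d}) : {set F} :=
  [set dotp x y | x in E, y in G].

(* Main.v *)
Require Import Defs.
From HB Require Import structures.
From mathcomp Require Import all_boot all_order all_algebra.
From mathcomp Require Import reals.
From mathcomp Require Import ring lra zify.
Import Order.TTheory GRing.Theory Num.Theory.
Local Open Scope ring_scope.


Lemma sum_sq_lin (R : realFieldType) (I : finType) (A : pred I) (k c : R) (b : I -> R) :
  \sum_(i in A) (k * b i - c)^+2 =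
  k^+2 * \sum_(i in A) b i ^+2 - 2 * k * c * \sum_(i in A) b i + #|A|%:R * c^+2.
Proof.
have E1 : forall i, (k * b i - c)^+2 = k^+2 * b i^+2 + (- (2*k*c * b i)) + c^+2.
  by move=> i; ring.
rewrite (eq_bigr _ (fun i _ => E1 i)) !big_split /=.
rewrite sumrN -!mulr_sumr sumr_const -[_ *+ #|A|]mulr_natl; ring.
Qed.

Lemma CS (R : realFieldType) (I : finType) (A : pred I) (b : I -> R) :
  (\sum_(i in A) b i)^+2 <= #|A|%:R * \sum_(i in A) b i ^+ 2.
Proof.
set n : R := #|A|%:R; set S := \sum_(i in A) b i; set T := \sum_(i in A) b i ^+ 2.
case: (posnP #|A|) => hA.
  move/card0_eq: (hA) => hA0.
  by rewrite /S /n hA (eq_bigl _ _ hA0) big_pred0_eq expr0n mul0r.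
have hn : 0 < n by rewrite /n ltr0n.
have : 0 <= \sum_(i in A) (n * b i - S)^+2 by apply: sumr_ge0 => i _; apply: sqr_ge0.
rewrite sum_sq_lin -/S -/T -/n => H.
have : 0 <= n * (n * T - S^+2).
  by have -> : n * (n * T - S^+2) = n^+2 * T - 2 * n * S * S + n * S^+2 by ring.
by rewrite pmulr_rge0 // subr_ge0.
Qed.

Lemma sum_ind (R : ringType) (I : finType) (a : I) :
  \sum_(t : I) ((a == t)%:R : R) = 1.
Proof.
rewrite (bigD1 a) //= eqxx big1 ?addr0 // => t; rewrite eq_sym => /negbTE ->.
by [].
Qed.

Lemma sum_ind2 (R : ringType) (I : finType) (a b : I) :
  \sum_(t : I) (((a == t)%:R : R) * (b == t)%:R) = (a == b)%:R.
Proof.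
rewrite (bigD1 a) //= eqxx mul1r big1 ?addr0; first by rewrite eq_sym.
by move=> t; rewrite eq_sym => /negbTE ->; rewrite mul0r.
Qed.

Lemma dotpZl (F : finFieldType) d (l : F) (X Y : 'rV[F]_d) :
  dotp (l *: X) Y = l * dotp X Y.
Proof. by rewrite /dotp mulr_sumr; apply: eq_bigr => i _; rewrite mxE mulrA. Qed.

Lemma dotpBr (F : finFieldType) d (Z Y Y' : 'rV[F]_d) :
  dotp Z (Y - Y') = dotp Z Y - dotp Z Y'.
Proof. by rewrite /dotp -sumrB; apply: eq_bigr => i _; rewrite !mxE mulrBr. Qed.

Lemma dotp_shift (F : finFieldType) d (k : 'I_d) (c : F) (Z W : 'rV[F]_d) :
  dotp (Z + c *: delta_mx 0 k) W = dotp Z W + c * W 0 k.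
Proof.
rewrite /dotp (eq_bigr (fun i => Z 0 i * W 0 i + (c * W 0 k) * (k == i)%:R)).
  by rewrite big_split /= -mulr_sumr sum_ind mulr1.
move=> i _; rewrite !mxE eqxx /=.
by have [->|ne] := eqVneq i k; rewrite ?eqxx 1?eq_sym ?(negbTE ne) /=; ring.
Qed.

Definition mc (R : ringType) (F : finFieldType) d (G : {set 'rV[F]_d})
  (Z : 'rV[F]_d) (t : F) : R := \sum_(Y in G) ((dotp Z Y == t)%:R).
Arguments mc R {F d} G Z t.

Lemma sum_mc (R : ringType) (F : finFieldType) d (G : {set 'rV[F]_d}) Z :
  \sum_(t : F) (mc R G Z t) = #|G|%:R.
Proof.
rewrite /mc exchange_big /=; under eq_bigr do rewrite sum_ind.
by rewrite sumr_const.
Qed.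

Lemma S2_eq (R : ringType) (F : finFieldType) d (G : {set 'rV[F]_d}) Z :
  \sum_(t : F) (mc R G Z t)^+2 =
  \sum_(Y in G) \sum_(Y' in G) ((dotp Z (Y - Y') == 0)%:R).
Proof.
rewrite (eq_bigr (fun t => \sum_(Y in G) \sum_(Y' in G)
   ((dotp Z Y == t)%:R * (dotp Z Y' == t)%:R))).
  rewrite exchange_big; apply: eq_bigr => Y _; rewrite exchange_big.
  by apply: eq_bigr => Y' _; rewrite sum_ind2 dotpBr subr_eq0.
by move=> t _; rewrite expr2 /mc mulr_suml; apply: eq_bigr => Y _; rewrite mulr_sumr.
Qed.

Lemma S2_scale (R : ringType) (F : finFieldType) d (G : {set 'rV[F]_d}) X (l : F) :
  l != 0 ->
  \sum_(t : F) (mc R G (l *: X) t)^+2 = \sum_(t : F) (mc R G X t)^+2.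
Proof.
move=> hl.
have e : forall t, mc R G (l *: X) t = mc R G X (l^-1 * t).
  move=> t; apply: eq_bigr => Y _; rewrite dotpZl; congr (_%:R); congr (nat_of_bool _).
  apply/idP/idP => /eqP h; apply/eqP; first by rewrite -h mulKf.
  by rewrite h mulVKf.
under eq_bigr do rewrite e.
by rewrite (reindex_inj (mulfI hl)) /=; under eq_bigr do rewrite mulKf //.
Qed.

Definition Kc (R : ringType) (F : finFieldType) d (W : 'rV[F]_d) : R :=
  \sum_(Z : 'rV[F]_d) ((dotp Z W == 0)%:R).
Arguments Kc R {F d} W.

Lemma card_rV (R : ringType) (F : finFieldType) d :
  \sum_(Z : 'rV[F]_d) (1 : R) = (#|{: F}|%:R)^+d.
Proof. by rewrite sumr_const card_mx mul1n natrX. Qed.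

Lemma Kc0 (R : ringType) (F : finFieldType) d :
  Kc R (0 : 'rV[F]_d) = (#|{: F}|%:R)^+d.
Proof.
rewrite -card_rV; apply: eq_bigr => Z _.
by rewrite /dotp big1 ?eqxx // => i _; rewrite mxE mulr0.
Qed.

Lemma KcN0 (R : ringType) (F : finFieldType) d (W : 'rV[F]_d) :
  W != 0 -> #|{: F}|%:R * Kc R W = (#|{: F}|%:R)^+d.
Proof.
move=> hW.
have [k hk] : exists k, W 0 k != 0.
  apply/existsP; apply: contraR hW => /existsPn h; apply/eqP/rowP => j.
  by rewrite mxE; apply/eqP; apply: negbNE (h j).
have e : forall t, \sum_(Z : 'rV[F]_d) ((dotp Z W == t)%:R : R) = Kc R W.
  move=> t; rewrite (reindex_inj (addIr (t / W 0 k *: delta_mx 0 k))) /=.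
  apply: eq_bigr => Z _; rewrite dotp_shift divfK //; congr (_%:R); congr (nat_of_bool _).
  apply/idP/idP => /eqP h; apply/eqP; first by apply: (addIr t); rewrite add0r.
  by rewrite h add0r.
have tot : \sum_(t : F) \sum_(Z : 'rV[F]_d) ((dotp Z W == t)%:R : R) = (#|{: F}|%:R)^+d.
  by rewrite exchange_big /=; under eq_bigr do rewrite sum_ind; rewrite card_rV.
rewrite -tot; under [RHS]eq_bigr do rewrite e; rewrite sumr_const. by rewrite mulr_natl.
Qed.

Lemma sum_diag (R : ringType) (T : finType) (G : {set T}) Y :
  Y \in G -> \sum_(Y' in G) ((Y == Y')%:R : R) = 1.
Proof.
move=> hY; rewrite (bigD1 Y) //= eqxx big1 ?addr0 // => Y' /andP [_ ne].
by rewrite eq_sym (negbTE ne).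
Qed.

Lemma sumS2 (R : realFieldType) (F : finFieldType) d (G : {set 'rV[F]_d}) :
  let q : R := #|{: F}|%:R in let g : R := #|G|%:R in
  q * \sum_(Z : 'rV[F]_d) \sum_(t : F) (mc R G Z t)^+2 =
  g^+2 * q^+d + g * (q^+d.+1 - q^+d).
Proof.
move=> q g.
under eq_bigr do rewrite S2_eq.
rewrite exchange_big /=; under eq_bigr do rewrite exchange_big /=.
rewrite mulr_sumr.
rewrite (eq_bigr (fun Y => \sum_(Y' in G) (q^+d + (Y == Y')%:R * (q^+d.+1 - q^+d)))); last first.
  move=> Y hY; rewrite mulr_sumr; apply: eq_bigr => Y' hY'.
  have [<-|ne] := eqVneq Y Y'.
    rewrite subrr -/(Kc R 0) Kc0 /= -/q exprS. by rewrite mul1r addrC subrK.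
  rewrite -/(Kc R (Y - Y')) KcN0 ?subr_eq0 // -/q. by rewrite mul0r addr0.
rewrite (eq_bigr (fun Y => g * q^+d + (q^+d.+1 - q^+d))); last first.
  move=> Y hY; rewrite big_split /= sumr_const -mulr_suml sum_diag // mul1r.
  by rewrite -/g mulr_natl.
by rewrite sumr_const -mulr_natl -/g; ring.
Qed.

Definition hh (R : realFieldType) (F : finFieldType) d (G : {set 'rV[F]_d}) (Z : 'rV[F]_d) : R :=
  #|{: F}|%:R * \sum_(t : F) (mc R G Z t)^+2 - (#|G|%:R)^+2.
Arguments hh R {F d} G Z.

Lemma sum_hh (R : realFieldType) (F : finFieldType) d (G : {set 'rV[F]_d}) :
  \sum_(Z : 'rV[F]_d) hh R G Z = #|G|%:R * (#|{: F}|%:R)^+d * (#|{: F}|%:R - 1).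
Proof.
rewrite /hh sumrB -mulr_sumr sumS2.
rewrite (_ : \sum_(Z : 'rV[F]_d) (#|G|%:R ^+ 2 : R) = (#|G|%:R ^+ 2) * \sum_(Z : 'rV[F]_d) 1).
  by rewrite card_rV (exprS (#|{: F}|%:R) d); ring.
by rewrite mulr_sumr; apply: eq_bigr => Z _; rewrite mulr1.
Qed.

Lemma CST (R : realFieldType) (I : finType) (b : I -> R) :
  (\sum_i b i)^+2 <= #|{: I}|%:R * \sum_i b i ^+ 2.
Proof. exact: (CS _ _ predT b). Qed.

Lemma hh_ge0 (R : realFieldType) (F : finFieldType) d (G : {set 'rV[F]_d}) Z :
  0 <= hh R G Z.
Proof.
rewrite /hh subr_ge0 -(sum_mc R _ _ G Z).
exact: CST.
Qed.

Lemma hh_scale (R : realFieldType) (F : finFieldType) d (G : {set 'rV[F]_d}) Z (l : F) :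
  l != 0 -> hh R G (l *: Z) = hh R G Z.
Proof. by move=> hl; rewrite /hh S2_scale. Qed.


Lemma inP_eq (F : finFieldType) d (jd : 'I_d) (hj : val jd = d.-1) (x : 'rV[F]_d) :
  x \in paraboloid F d -> \sum_(i < d | i != jd) x 0 i ^+ 2 = x 0 jd.
Proof.
rewrite inE => /forallP /(_ jd) /implyP; rewrite hj eqxx => /(_ isT) /eqP.
by [].
Qed.

Lemma notPbar (F : finFieldType) d (jd : 'I_d) (hj : val jd = d.-1) (a : 'rV[F]_d) :
  a \notin paraboloid_bar F d -> \sum_(i < d | i != jd) a 0 i ^+ 2 + a 0 jd != 0.
Proof.
apply: contra => h; rewrite inE; apply/forallP => j; apply/implyP => /eqP hj'.
have -> : j = jd by apply: val_inj => /=; rewrite hj hj'.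
by rewrite -addr_eq0.
Qed.

Lemma root_bound (F : finFieldType) d (jd : 'I_d) (hj : val jd = d.-1) (a Z : 'rV[F]_d) :
  \sum_(i < d | i != jd) a 0 i ^+ 2 + a 0 jd != 0 ->
  (#|[set mu : F | ((mu *: Z - a)%R \in paraboloid F d)]| <= 2)%N.
Proof.
move=> hb.
set A := \sum_(i < d | i != jd) Z 0 i ^+ 2.
set B := 2 * \sum_(i < d | i != jd) (Z 0 i * a 0 i) + Z 0 jd.
set b := \sum_(i < d | i != jd) a 0 i ^+ 2 + a 0 jd.
set p : {poly F} := \poly_(i < 3) (nth 0 [:: b; - B; A] i).
have hp : forall mu, p.[mu] = A * mu^+2 - B * mu + b.
  move=> mu; rewrite /p horner_poly !big_ord_recl big_ord0 /=.
  by rewrite /bump /=; ring.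
have hpm : forall mu, (mu *: Z - a)%R \in paraboloid F d -> root p mu.
  move=> mu /(inP_eq _ _ _ hj) h; rewrite /root hp.
  have e : \sum_(i < d | i != jd) (mu *: Z - a) 0 i ^+ 2 =
      mu^+2 * A - mu * (2 * \sum_(i < d | i != jd) (Z 0 i * a 0 i))
      + \sum_(i < d | i != jd) a 0 i ^+ 2.
    have E1 : forall i, (mu *: Z - a) 0 i ^+ 2 =
        mu^+2 * Z 0 i ^+ 2 + - (mu * 2 * (Z 0 i * a 0 i)) + a 0 i ^+ 2.
      by move=> i; rewrite !mxE; ring.
    rewrite (eq_bigr _ (fun i _ => E1 i)) !big_split /= sumrN -!mulr_sumr /A.
    by rewrite mulrA.
  move: h; rewrite e !mxE => h.
  apply/eqP; rewrite /B /b.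
  have -> : A * mu ^+ 2 -
      (2 * \sum_(i < d | i != jd) Z 0 i * a 0 i + Z 0 jd) * mu +
      (\sum_(i < d | i != jd) a 0 i ^+ 2 + a 0 jd) =
      (mu^+2 * A - mu * (2 * \sum_(i < d | i != jd) (Z 0 i * a 0 i))
      + \sum_(i < d | i != jd) a 0 i ^+ 2) - (mu * Z 0 jd + - a 0 jd) by ring.
  by rewrite h subrr.
have pn0 : p != 0.
  apply/eqP => p0; move: hb; rewrite -/b.
  have := hp 0; rewrite p0 horner0 expr0n /= !mulr0 subr0 add0r => <-.
  by rewrite eqxx.
have szp : (size p <= 3)%N by apply: size_poly.
set S := [set mu : F | _].
have sub : S \subset [set mu | root p mu].
  apply/subsetP => mu; rewrite /S in_set => /(hpm mu) hr; by rewrite in_set.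
have := max_poly_roots pn0 (rs := enum [set mu | root p mu]).
rewrite enum_uniq -cardE => /(_ _ isT) H.
have : (#|[set mu | root p mu]| < size p)%N.
  apply: H; apply/allP => mu; rewrite mem_enum inE; exact.
move=> H2; have := subset_leq_card sub.
move: H2 szp; clear; lia.
Qed.


Lemma sum_bool_card (R : ringType) (T : finType) (S : {set T}) :
  \sum_(l : T) ((l \in S)%:R : R) = #|S|%:R.
Proof.
rewrite (eq_bigr (fun l => if l \in S then 1 else 0)); last by move=> l _; case: (l \in S).
by rewrite -big_mkcond sumr_const.
Qed.

Lemma fiber_le2 (R : realFieldType) (F : finFieldType) d (jd : 'I_d) (hj : val jd = d.-1)
   (a : 'rV[F]_d) (E : {set 'rV[F]_d}) (Z : 'rV[F]_d) :
  \sum_(i < d | i != jd) a 0 i ^+ 2 + a 0 jd != 0 ->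
  E \subset translate (paraboloid F d) a ->
  \sum_(l : F | l != 0) (((l^-1 *: Z) \in E)%:R : R) <= 2.
Proof.
move=> hb hE.
rewrite (reindex_inj invr_inj) /=.
under eq_bigl do rewrite invr_eq0.
under eq_bigr do rewrite invrK.
set S := [set mu : F | ((mu *: Z - a)%R \in paraboloid F d)].
apply: (le_trans (y := \sum_(l : F) ((l \in S)%:R : R))).
  rewrite big_mkcond /=; apply: ler_sum => l _; case: (l != 0) => //=.
  case hl: (l *: Z \in E) => //=.
  rewrite /S in_set.
  move/subsetP: hE => /(_ _ hl) /imsetP [x hx ->].
  by rewrite addrK hx.
rewrite sum_bool_card.
have := root_bound _ _ _ hj _ Z hb.
rewrite -/S => h.
by rewrite ler_nat.
Qed.

Lemma card_nz (R : ringType) (F : finFieldType) :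
  \sum_(l : F | l != 0) (1 : R) = #|{: F}|%:R - 1.
Proof.
rewrite sumr_const.
have -> : #|[pred l : F | l != 0]| = #|{: F}|.-1 by exact: cardC1.
have q0 : (0 < #|{: F}|)%N by apply/card_gt0P; exists 0.
by rewrite -subn1 natrB.
Qed.

Lemma F4 (R : realFieldType) (F : finFieldType) d (jd : 'I_d) (hj : val jd = d.-1)
   (a : 'rV[F]_d) (E G : {set 'rV[F]_d}) :
  \sum_(i < d | i != jd) a 0 i ^+ 2 + a 0 jd != 0 ->
  E \subset translate (paraboloid F d) a ->
  (#|{: F}|%:R - 1) * \sum_(X in E) hh R G X <= 2 * \sum_(Z : 'rV[F]_d) hh R G Z.
Proof.
move=> hb hE.
have e1 : forall X, (#|{: F}|%:R - 1) * hh R G X = \sum_(l : F | l != 0) hh R G (l *: X).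
  move=> X; rewrite (eq_bigr (fun _ => hh R G X)); last by move=> l hl; rewrite hh_scale.
  by rewrite -(card_nz R F) mulr_suml; apply: eq_bigr => l _; rewrite mul1r.
rewrite mulr_sumr; under eq_bigr do rewrite e1.
rewrite exchange_big /=.
have e2 : forall l : F, l != 0 -> \sum_(X in E) hh R G (l *: X) =
    \sum_(Z : 'rV[F]_d) (((l^-1 *: Z) \in E)%:R * hh R G Z).
  move=> l hl; rewrite [RHS](reindex_inj (scalerI hl)) /=.
  under [RHS]eq_bigr do rewrite scalerA mulVf // scale1r.
  rewrite big_mkcond /=; apply: eq_bigr => X _.
  by case: (X \in E); rewrite ?mul1r ?mul0r.
rewrite (eq_bigr _ e2) exchange_big /= mulr_sumr; apply: ler_sum => Z _.
rewrite -mulr_suml mulrC [X in _ <= X]mulrC; apply: ler_wpM2l; first exact: hh_ge0.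
exact: (fiber_le2 _ _ _ _ hj _ _ _ hb hE).
Qed.


Lemma CSs (R : realFieldType) (I : finType) (A : {set I}) (b : I -> R) :
  (\sum_(i in A) b i)^+2 <= #|A|%:R * \sum_(i in A) b i ^+ 2.
Proof.
have := CS _ _ (fun i => i \in A) b.
by rewrite (@eq_card _ _ A).
Qed.

Lemma sum_sq_linT (R : realFieldType) (I : finType) (k c : R) (b : I -> R) :
  \sum_i (k * b i - c)^+2 =
  k^+2 * \sum_i b i ^+2 - 2 * k * c * \sum_i b i + #|{: I}|%:R * c^+2.
Proof. exact: (sum_sq_lin _ _ predT). Qed.

Lemma sum_supp (R : ringType) (T : finType) (S : {set T}) (f : T -> R) :
  (forall t, t \notin S -> f t = 0) -> \sum_t f t = \sum_(t in S) f t.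
Proof.
move=> h; rewrite [RHS]big_mkcond; apply: eq_bigr => t _.
by case: ifP => // /negbT /h.
Qed.

Lemma final_arith (R : realFieldType) (q e g Q Hd A P : R) :
  0 < q -> 0 <= e -> 0 <= P -> 0 < Q ->
  q^+2 * A - q * (e * g)^+2 <= q * (e * Hd) -> Hd <= 2 * g * Q -> 2 * Q <= e * g ->
  (e * g)^+2 <= P * A -> 2^-1 * q <= P.
Proof.
move=> q0 e0 P0 Q0 h1 h2 h3 h4.
set N := e * g in h1 h3 h4.
have N0 : 0 < N by lra.
have h5 : q * A <= N^+2 + e * Hd.
  have : q * (q * A - N^+2 - e * Hd) <= 0.
    have -> : q * (q * A - N^+2 - e * Hd) = q^+2 * A - q * N^+2 - q * (e * Hd) by ring.
    lra.
  rewrite pmulr_rle0 //; lra.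
have h6 : e * Hd <= 2 * N * Q.
  have : e * Hd <= e * (2 * g * Q) by apply: ler_wpM2l.
  by rewrite /N; lra.
have h7 : 2 * N * Q <= N^+2.
  have : N * (2 * Q) <= N * N by apply: ler_wpM2l => //; lra.
  by rewrite expr2; lra.
have h8 : q * A <= 2 * N^+2 by lra.
have h9 : q * N^+2 <= 2 * P * N^+2.
  have : q * N^+2 <= q * (P * A) by apply: ler_wpM2l => //; lra.
  have : P * (q * A) <= P * (2 * N^+2) by apply: ler_wpM2l.
  lra.
have N20 : 0 < N^+2 by apply: exprn_gt0.
have : q <= 2 * P.
  by rewrite -(ler_pM2r N20).
lra.
Qed.

Theorem theorem3p9 (R : realType) (d : nat) (hd : (2 <= d)%N) :
  exists (C c : R), 1 < C /\ 0 < c /\ c < 1 /\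
    forall (F : finFieldType),
      (forall p : nat, p \in [pchar F] -> (2 < p)%N) ->
      forall (a : 'rV[F]_d) (E G : {set 'rV[F]_d}),
        a \notin paraboloid_bar F d ->
        E \subset translate (paraboloid F d) a ->
        C * (#|{: F}|%:R) ^+ d <= (#|E| * #|G|)%:R ->
        c * #|{: F}|%:R <= (#|dot_set E G|)%:R.
Proof.
exists 2, 2^-1.
split; first lra.
split; first lra.
split; first lra.
move=> F _ a E G ha hE hC.
have hjd : (d.-1 < d)%N by rewrite ltn_predL; apply: leq_trans hd.
set jd : 'I_d := Ordinal hjd.
have hj : val jd = d.-1 by [].
have hb := notPbar _ _ _ hj a ha.
set q : R := #|{: F}|%:R.
set e : R := #|E|%:R.
set g : R := #|G|%:R.
set Pi := dot_set E G.
set nu := fun t : F => \sum_(X in E) mc R G X t.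
have q1 : 1 < q.
  rewrite /q (_ : 1 = 1%:R) // ltr_nat; apply/card_gt1P; exists 0, 1.
  by rewrite !inE eq_sym oner_neq0.
have sumnu : \sum_(t : F) nu t = e * g.
  rewrite /nu exchange_big /=; under eq_bigr do rewrite sum_mc.
  by rewrite sumr_const /e /g mulr_natl.
have nu0 : forall t, t \notin Pi -> nu t = 0.
  move=> t ht; apply: big1 => X hX; apply: big1 => Y hY.
  case: eqP => // ed; case/negP: ht; rewrite -ed.
  by apply/imset2P; exists X Y.
have F2 : (e * g)^+2 <= #|Pi|%:R * \sum_(t : F) nu t ^+ 2.
  rewrite -sumnu (sum_supp _ _ _ _ nu0) (sum_supp _ _ Pi (fun t => nu t ^+ 2)).
    exact: CSs.
  by move=> t /nu0 ->; rewrite expr0n.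
have F3 : \sum_(t : F) (q * nu t - e * g)^+2 <=
          e * \sum_(X in E) \sum_(t : F) (q * mc R G X t - g)^+2.
  apply: (le_trans (y := \sum_(t : F) (e * \sum_(X in E) (q * mc R G X t - g)^+2))).
    apply: ler_sum => t _.
    rewrite (_ : q * nu t - e * g = \sum_(X in E) (q * mc R G X t - g)).
      exact: CSs.
    by rewrite sumrB -mulr_sumr sumr_const /e mulr_natl.
  by rewrite -mulr_sumr exchange_big.
rewrite sum_sq_linT sumnu -/q in F3.
have e3 : forall X, \sum_(t : F) (q * mc R G X t - g)^+2 = q * hh R G X.
  move=> X; rewrite sum_sq_linT sum_mc /hh -/q -/g; ring.
have e4 : \sum_(X in E) \sum_(t : F) (q * mc R G X t - g)^+2 = q * \sum_(X in E) hh R G X.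
  by rewrite mulr_sumr; apply: eq_bigr => X _; exact: e3.
rewrite e4 in F3.
have hF4 := F4 R _ _ _ hj _ _ G hb hE.
rewrite sum_hh -/q -/g in hF4.
have hHd : \sum_(X in E) hh R G X <= 2 * g * q^+d.
  have q10 : 0 < q - 1 by lra.
  rewrite -(ler_pM2l q10); apply: (le_trans hF4); rewrite le_eqVlt; apply/orP; left; apply/eqP; ring.
apply: (final_arith _ q e g (q^+d) (\sum_(X in E) hh R G X) (\sum_(t : F) nu t ^+ 2)).
- lra.
- by rewrite /e ler0n.
- by rewrite ler0n.
- apply: exprn_gt0; lra.
- have -> : q ^+ 2 * \sum_t nu t ^+ 2 - q * (e * g) ^+ 2 =
     q ^+ 2 * \sum_t nu t ^+ 2 - 2 * q * (e * g) * (e * g) + q * (e * g) ^+ 2 by ring.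
  apply: (le_trans F3); rewrite le_eqVlt; apply/orP; left; apply/eqP; ring.
- exact: hHd.
- by rewrite /e /g -natrM.
- exact: F2.
Qed.
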